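(* Let $(\mathcal{L},\mathcal{D}(\mathcal{L}))$ be the generator of a $C_0$-contraction semigroup on a Banach space $\mathcal{X}$ and $M\in\mathcal{B}(\mathcal{X})$ a contraction such that $\|M^n-P\|_\infty\le\tilde c\,\delta^n$ for some projection $P$, some $\delta\in(0,1)$, $\tilde c\ge0$ and all $n\in\mathbb{N}$. Assume there is $b\ge0$ such that for all $t\ge0$ $$\|Pe^{t\mathcal{L}}(\mathbf{1}-P)\|_\infty\le tb\quad\text{and}\quad\|(\mathbf{1}-P)e^{t\mathcal{L}}P\|_\infty\le tb.$$ If $(P\mathcal{L}P,\mathcal{D}(\mathcal{L}P))$ is the generator of a $C_0$-semigroup, then for $t\ge0$ there exist a constant $c>0$ and $n_0\in\mathbb{N}$ such that $\tilde\delta:=\tilde c\,\delta^{n_0}<1$ and for all $n\in\mathbb{N}$ and all $x\in\mathcal{D}((\mathcal{L}P)^2)$ $$\Big\|\big(M^{n_0}e^{\frac tn\mathcal{L}}\big)^nx-e^{tP\mathcal{L}P}Px\Big\|\le\frac cn\big(\|x\|+\|\mathcal{L}Px\|+\|(\mathcal{L}P)^2x\|\big)+\tilde\delta^n\|x\|.$$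
   Context: $\mathcal{B}(\mathcal{X})$: bounded operators with operator norm $\|\cdot\|_\infty$; $\mathbf{1}$ the identity; contraction: norm at most $1$; projection: bounded idempotent. A $C_0$-contraction semigroup is a strongly continuous semigroup of contractions, denoted $e^{t\mathcal{L}}$ by its generator. Domains: $\mathcal{D}(\mathcal{L}P)=\{x:Px\in\mathcal{D}(\mathcal{L})\}$, $\mathcal{D}((\mathcal{L}P)^2)=\{x\in\mathcal{D}(\mathcal{L}P):\mathcal{L}Px\in\mathcal{D}(\mathcal{L}P)\}$; $P\mathcal{L}P$ is considered on $\mathcal{D}(\mathcal{L}P)$. *)

(* Defs.v *)
From HB Require Import structures.
From mathcomp Require Import all_boot all_order all_algebra.
From mathcomp Require Import all_classical all_reals all_analysis.
Set Implicit Arguments. Unset Strict Implicit. Unset Printing Implicit Defensive.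
Import Order.TTheory GRing.Theory Num.Theory.
Import numFieldNormedType.Exports.
Local Open Scope classical_set_scope.
Local Open Scope ring_scope.

Section Defs.
Context {R : realType} {X : completeNormedModType R}.

Definition is_linear (A : X -> X) : Prop :=
  forall (a : R) (x y : X), A (a *: x + y) = a *: A x + A y.

Definition opnorm_le (A : X -> X) (r : R) : Prop :=
  forall x : X, `|A x| <= r * `|x|.

Definition bounded_op (A : X -> X) : Prop :=
  is_linear A /\ exists C : R, opnorm_le A C.

Definition contraction_op (A : X -> X) : Prop :=
  is_linear A /\ opnorm_le A 1.

Definition projection_op (P : X -> X) : Prop :=
  bounded_op P /\ (forall x, P (P x) = P x).

(* C_0-semigroup (t |-> T t, only t >= 0 relevant) *)
Definition C0_semigroup (T : R -> X -> X) : Prop :=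
  (forall t, 0 <= t -> bounded_op (T t)) /\
  (forall x, T 0 x = x) /\
  (forall s t x, 0 <= s -> 0 <= t -> T (s + t) x = T s (T t x)) /\
  (forall x, T^~ x @ at_right 0 --> x).

Definition C0_contraction_semigroup (T : R -> X -> X) : Prop :=
  C0_semigroup T /\ (forall t, 0 <= t -> opnorm_le (T t) 1).

Definition diffq (T : R -> X -> X) (x : X) : R -> X :=
  fun h => h^-1 *: (T h x - x).

Definition generator_of (T : R -> X -> X) (D : set X) (L : X -> X) : Prop :=
  (forall x, D x <-> exists l : X, diffq T x @ at_right 0 --> l) /\
  (forall x, D x -> diffq T x @ at_right 0 --> L x).

End Defs.

(* Main.v *)
Require Import Defs.
From HB Require Import structures.
From mathcomp Require Import all_boot all_order all_algebra.
From mathcomp Require Import all_classical all_reals all_analysis.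
From mathcomp Require Import ring lra.
Import Order.TTheory GRing.Theory Num.Theory.
Import numFieldNormedType.Exports.
Local Open Scope classical_set_scope.
Local Open Scope ring_scope.
Set Implicit Arguments. Unset Strict Implicit. Unset Printing Implicit Defensive.
Section Aux.
Context {R : realType} {X : completeNormedModType R}.
Implicit Types (A B : X -> X) (x y : X).

Lemma lin0 A : is_linear A -> A 0 = 0.
Proof.
move=> hA; have := hA 1 0 0; rewrite !scale1r addr0 => H.
by have := congr1 (fun z => z - A 0) H; rewrite subrr addrK => <-.
Qed.
Lemma linD A : is_linear A -> forall x y, A (x + y) = A x + A y.
Proof. by move=> hA x y; have := hA 1 x y; rewrite !scale1r. Qed.
Lemma linZ A : is_linear A -> forall a x, A (a *: x) = a *: A x.
Proof. by move=> hA a x; have := hA a x 0; rewrite !addr0 lin0 // addr0. Qed.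
Lemma linN A : is_linear A -> forall x, A (- x) = - A x.
Proof. by move=> hA x; rewrite -scaleN1r linZ // scaleN1r. Qed.
Lemma linB A : is_linear A -> forall x y, A (x - y) = A x - A y.
Proof. by move=> hA x y; rewrite linD // linN. Qed.

Lemma near_right_ex (Q : R -> Prop) : (\forall h \near 0^'+, Q h) ->
  exists2 d : R, 0 < d & forall h, 0 < h -> h < d -> Q h.
Proof.
move=> /nbhs_ballP [d d0 H]; exists d => // h h0 hd; apply: H => //.
by rewrite -ball_normE /= sub0r normrN gtr0_norm.
Qed.

Lemma ex_near_right (Q : R -> Prop) d : 0 < d ->
  (forall h, 0 < h -> h < d -> Q h) -> \forall h \near 0^'+, Q h.
Proof.
move=> d0 H; apply/nbhs_ballP; exists d => // h /=.
rewrite -ball_normE /= sub0r normrN => hd h0; apply: H => //.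
by rewrite (le_lt_trans _ hd) // ler_norm.
Qed.

Lemma cvg_right_ex (f : R -> X) l : f @ 0^'+ --> l ->
  forall e, 0 < e -> exists2 d : R, 0 < d &
    forall h, 0 < h -> h < d -> `|f h - l| <= e.
Proof.
move=> /cvgrPdist_le H e e0; have [d d0 Hd] := near_right_ex (H e e0).
by exists d => // h h0 hd; rewrite distrC; apply: Hd.
Qed.

Lemma ex_cvg_right (f : R -> X) l :
  (forall e, 0 < e -> exists2 d : R, 0 < d &
    forall h, 0 < h -> h < d -> `|f h - l| <= e) -> f @ 0^'+ --> l.
Proof.
move=> H; apply/cvgrPdist_le => e e0; have [d d0 Hd] := H e e0.
by apply: (ex_near_right d0) => h h0 hd; rewrite distrC; apply: Hd.
Qed.

Definition sg_ok (U : R -> X -> X) :=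
  (forall r, 0 <= r -> is_linear (U r)) /\ (forall x, U 0 x = x) /\
  (forall r s x, 0 <= r -> 0 <= s -> U (r + s) x = U r (U s x)).

Lemma diffq_eq (U : R -> X -> X) z l h : 0 < h ->
  U h z - z - h *: l = h *: (diffq U z h - l).
Proof.
move=> h0; rewrite /diffq scalerBr scalerA mulfV ?scale1r //.
by rewrite gt_eqF.
Qed.

Lemma choose_m (s d : R) : 0 < d -> 0 <= s ->
  exists m : nat, (0 < m)%N /\ s / m%:R < d.
Proof.
move=> d0 s0; exists (Num.trunc (s / d)).+1; split => //.
rewrite ltr_pdivrMr ?ltr0n // mulrC -ltr_pdivrMr //.
exact: truncnS_gt.
Qed.

Lemma small_eps (a e : R) : 0 <= a -> 0 < e -> a * (e / (a + 1)) <= e.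
Proof.
move=> a0 e0; rewrite mulrA ler_pdivrMr ?ltr_wpDl //.
by rewrite mulrC ler_wpM2l ?(ltW e0) // lerDl.
Qed.

Lemma sg_first U z l s K : sg_ok U -> 0 <= s -> 0 <= K ->
  (forall r v, 0 <= r -> r <= s -> `|U r v| <= K * `|v|) ->
  diffq U z @ 0^'+ --> l -> `|U s z - z| <= s * K * `|l|.
Proof.
case=> [hlin [h0 hsg]] s0 K0 hK hc.
move: s0; rewrite le_eqVlt => /orP [/eqP <-|spos].
  by rewrite h0 subrr normr0 !mul0r.
apply/ler_addgt0Pr => e e0.
set eps := e / (s * K + 1).
have eps0 : 0 < eps by rewrite divr_gt0 // ltr_wpDl // mulr_ge0 // ltW.
have [d d0 hd] := cvg_right_ex hc eps0.
have [m [m0 hm]] := choose_m d0 (ltW spos).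
set h := s / m%:R.
have hpos : 0 < h by rewrite divr_gt0 // ltr0n.
have mh : m%:R * h = s by rewrite /h mulrC divfK // pnatr_eq0 -lt0n.
have hd' : h < d by [].
clearbody h.
have hv : `|U h z - z| <= h * (`|l| + eps).
  have -> : U h z - z = h *: (diffq U z h - l) + h *: l.
    by rewrite -(diffq_eq _ _ _ hpos) subrK.
  apply: le_trans (ler_normD _ _) _.
  rewrite !normrZ gtr0_norm // mulrDr [h * `|l| + _]addrC.
  apply: lerD => //; apply: ler_wpM2l; [exact: ltW | exact: hd].
have key : forall j, (j <= m)%N ->
    `|U (j%:R * h) z - z| <= j%:R * h * K * (`|l| + eps).
  elim => [|j IH] hj.
    by rewrite mul0r h0 subrr normr0 !mul0r.
  have jh0 : 0 <= j%:R * h by rewrite mulr_ge0 // ltW.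
  have jhs : j%:R * h <= s.
    rewrite -mh; apply: ler_wpM2r; [exact: ltW | by rewrite ler_nat ltnW].
  rewrite -natr1 mulrDl mul1r.
  rewrite (hsg _ _ _ jh0 (ltW hpos)).
  have -> : U (j%:R * h) (U h z) - z =
     U (j%:R * h) (U h z - z) + (U (j%:R * h) z - z).
    by rewrite (linB (hlin _ jh0)) addrA subrK.
  apply: le_trans (ler_normD _ _) _.
  rewrite [X in _ <= X](_ : _ = K * (h * (`|l| + eps)) +
     j%:R * h * K * (`|l| + eps)); last by ring.
  apply: lerD; last exact: IH (ltnW hj).
  apply: le_trans (hK _ _ jh0 jhs) _.
  by rewrite ler_wpM2l.
have := key m (leqnn m); rewrite mh => /le_trans; apply.
rewrite mulrDr lerD2l; apply: small_eps => //.
by rewrite mulr_ge0 // ltW.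
Qed.

Lemma idA (V : zmodType) (a b c d e f : V) :
  a - c - (d + e) = (a - b - f) + (b - c - d) + (f - e).
Proof.
rewrite opprD addrA (addrAC (a - b) (-f)).
rewrite [in RHS]addrA subrK.
rewrite !addrA subrK //.
Qed.

Lemma sg_second U B z l s K G : sg_ok U -> is_linear B ->
  0 <= s -> 0 <= K -> 0 <= G ->
  (forall r v, 0 <= r -> r <= s -> `|B (U r v)| <= K * `|v|) ->
  (forall r, 0 <= r -> r <= s -> `|B (U r l - l)| <= r * G) ->
  diffq U z @ 0^'+ --> l -> `|B (U s z - z - s *: l)| <= s ^+ 2 * G.
Proof.
case=> [hlin [h0 hsg]] hB s0 K0 G0 hK hG hc.
move: s0; rewrite le_eqVlt => /orP [/eqP <-|spos].
  by rewrite h0 subrr scale0r subr0 lin0 // normr0 expr0n /= mul0r.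
apply/ler_addgt0Pr => e e0.
set eps := e / (s * K + 1).
have eps0 : 0 < eps by rewrite divr_gt0 // ltr_wpDl // mulr_ge0 // ltW.
have [d d0 hd] := cvg_right_ex hc eps0.
have [m [m0 hm]] := choose_m d0 (ltW spos).
pose h := s / m%:R.
have hpos : 0 < h by rewrite divr_gt0 // ltr0n.
have mh : m%:R * h = s by rewrite /h mulrC divfK // pnatr_eq0 -lt0n.
have hd' : h < d by [].
clearbody h.
have hv : `|U h z - z - h *: l| <= h * eps.
  rewrite (diffq_eq _ _ _ hpos) normrZ gtr0_norm //.
  by apply: ler_wpM2l; [exact: ltW | exact: hd].
have key : forall j, (j <= m)%N ->
    `|B (U (j%:R * h) z - z - (j%:R * h) *: l)| <=
      j%:R * h * K * eps + (j%:R * h) ^+ 2 * G.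
  elim => [|j IH] hj.
    by rewrite mul0r h0 subrr scale0r subr0 lin0 // normr0 expr0n /= !mul0r addr0.
  have jh0 : 0 <= j%:R * h by rewrite mulr_ge0 // ltW.
  have jhs : j%:R * h <= s.
    rewrite -mh; apply: ler_wpM2r; [exact: ltW | by rewrite ler_nat ltnW].
  rewrite -natr1 mulrDl mul1r.
  rewrite (hsg _ _ _ jh0 (ltW hpos)) scalerDl.
  rewrite (idA _ (U (j%:R * h) z) _ _ _ (h *: U (j%:R * h) l)).
  rewrite -(scalerBr h) -!(linZ (hlin _ jh0)) -!(linB (hlin _ jh0)).
  rewrite (linD hB) (linD hB (U _ (U h z - z - h *: l))) (linZ hB).
  apply: le_trans (ler_normD _ _) _.
  apply: le_trans (lerD (ler_normD _ _) (lexx _)) _.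
  rewrite normrZ gtr0_norm //.
  rewrite [X in _ <= X](_ : _ = (K * (h * eps) + (j%:R * h * K * eps + (j%:R * h) ^+ 2 * G) + h * (j%:R * h * G)) + (h ^+ 2 * G + h * (j%:R * h * G))); last by ring.
  rewrite -[X in X <= _]addr0; apply: lerD; last by rewrite addr_ge0 // !mulr_ge0 // ?sqr_ge0 // ltW.
  apply: lerD; last by apply: ler_wpM2l; [exact: ltW | exact: hG].
  apply: lerD; last exact: IH (ltnW hj).
  apply: le_trans (hK _ _ jh0 jhs) _.
  by rewrite ler_wpM2l.
have := key m (leqnn m); rewrite mh => /le_trans; apply.
rewrite addrC lerD2l; apply: small_eps => //.
by rewrite mulr_ge0 // ltW.
Qed.

Lemma norm_split (x y : X) : `|y| <= `|x| + `|y - x|.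
Proof.
rewrite addrC; have {1}-> : y = (y - x) + x by rewrite subrK.
exact: ler_normD.
Qed.

Lemma C0_local_bound (S : R -> X -> X) : C0_semigroup S ->
  forall t, 0 <= t -> exists K : R, 1 <= K /\
   forall s v, 0 <= s -> s <= t -> `|S s v| <= K * `|v|.
Proof.
case=> [hb [h0 [hsg hc]]] t t0.
have stepA : exists d K0 : R, [/\ 0 < d, 1 <= K0 &
    forall s v, 0 <= s -> s <= d -> `|S s v| <= K0 * `|v|].
  apply: contrapT => H.
  have H' : forall n : nat, exists s : R, (0 <= s /\ s <= n.+1%:R^-1) /\
      exists v, n.+1%:R * `|v| < `|S s v|.
    move=> n; apply: contrapT => Hn; apply: H.
    exists n.+1%:R^-1, n.+1%:R; split; first by rewrite invr_gt0 ltr0n.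
      by rewrite ler1n.
    move=> s v s0 sd; rewrite leNgt; apply/negP => Hlt; apply: Hn.
    by exists s; split => //; exists v.
  have [sn Hsn] := choice H'.
  pose F := [set f : X -> X | exists n, f = S (sn n)].
  have hF : forall f, F f -> bounded_fun_norm f /\ linear f.
    move=> f [n ->]; have [s0 _] := (Hsn n).1.
    have [hl [C hC]] := hb _ s0; split => //.
    move=> r; exists (`|C| * r) => x xr.
    apply: le_trans (hC x) _; apply: le_trans (_ : _ <= `|C| * `|x|) _.
      by apply: ler_wpM2r => //; exact: ler_norm.
    by apply: ler_wpM2l.
  have pF : pointwise_bounded F.
    move=> x.
    have [d d0 hd] := cvg_right_ex (hc x) ltr01.
    have [m [m0 hm]] := choose_m d0 ler01.
    have fin : forall N, exists M : R, 0 <= M /\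
        forall n, (n < N)%N -> `|S (sn n) x| <= M.
      elim => [|N [M [M0 HM]]]; first by exists 0; split => // n.
      exists (M + `|S (sn N) x|); split; first by rewrite addr_ge0.
      move=> n; rewrite ltnS leq_eqVlt => /orP [/eqP ->|/HM hn].
        by rewrite lerDr.
      by apply: le_trans hn _; rewrite lerDl.
    have [M [M0 HM]] := fin m.
    exists (M + (`|x| + 1)) => f [n ->].
    have [hnm|hmn] := ltnP n m.
      by apply: le_trans (HM _ hnm) _; rewrite lerDl addr_ge0.
    apply: le_trans (_ : _ <= `|x| + 1) _; last by rewrite lerDr.
    have [[s0 sn1] _] := Hsn n.
    move: s0; rewrite le_eqVlt => /orP [/eqP <-|spos].
      by rewrite h0 lerDl.
    apply: le_trans (norm_split x _) _; rewrite lerD2l.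
    apply: hd => //; apply: le_lt_trans sn1 _; apply: le_lt_trans hm.
    rewrite div1r lef_pV2 ?posrE ?ltr0n // ler_nat.
    exact: leqW.
  have [M HM] := Banach_Steinhauss hF pF 1.
  pose n := Num.trunc M.
  have Mn : M < n.+1%:R by apply: truncnS_gt.
  have [_ [v Hv]] := Hsn n.
  have [s0 _] := (Hsn n).1.
  have [hl _] := hb _ s0.
  have vpos : 0 < `|v|.
    rewrite lt_def normr_ge0 andbT normr_eq0; apply/eqP => v0.
    by move: Hv; rewrite v0 lin0 // normr0 mulr0 ltxx.
  have u1 : Num.norm ((Num.norm v)^-1 *: v) <= 1.
    by rewrite normrZ normfV normr_id mulVf // gt_eqF.
  have := HM _ (ex_intro _ n erefl) _ u1.
  rewrite linZ // normrZ normfV normr_id ler_pdivrMl // => HSv.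
  have := lt_le_trans Hv HSv; rewrite mulrC ltr_pM2l //.
  by move/(lt_trans Mn); rewrite ltxx.
have [d [K0 [d0 K01 hK0]]] := stepA.
have [N [N0 hN]] := choose_m d0 t0.
exists (K0 ^+ N); split; first exact: exprn_ege1.
move=> s v s0 st.
have r0 : 0 <= s / N%:R by rewrite divr_ge0.
have rd : s / N%:R <= d.
  apply: ltW; apply: le_lt_trans _ hN; apply: ler_wpM2r => //.
have key : forall j v, `|S (j%:R * (s / N%:R)) v| <= K0 ^+ j * `|v|.
  elim => [|j IH] w; first by rewrite mul0r h0 expr0 mul1r.
  rewrite -natr1 mulrDl mul1r hsg ?mulr_ge0 //.
  apply: le_trans (IH _) _; rewrite exprSr -mulrA ler_wpM2l //.
    by rewrite exprn_ge0 // (le_trans ler01).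
  exact: hK0.
by have := key N v; rewrite mulrC divfK // pnatr_eq0 -lt0n.
Qed.

Lemma bernoulli (q : R) (n : nat) : 0 <= q -> 1 + n%:R * q <= (1 + q) ^+ n.
Proof.
move=> q0; elim: n => [|n IH]; first by rewrite mul0r addr0 expr0.
rewrite exprSr -natr1 (le_trans _ (ler_wpM2r _ IH)) ?addr_ge0 //.
have : 0 <= n%:R * q * q by rewrite !mulr_ge0.
nra.
Qed.

Lemma lim_unique_right (f : R -> X) (l1 l2 : X) :
  f @ 0^'+ --> l1 -> f @ 0^'+ --> l2 -> l1 = l2.
Proof.
move=> c1 c2; apply/eqP; rewrite -subr_eq0 -normr_eq0 eq_le normr_ge0 andbT.
apply/ler_addgt0Pr => e e0; rewrite add0r.
have e20 : 0 < e / 2 by rewrite divr_gt0.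
have [d1 d10 H1] := cvg_right_ex c1 e20.
have [d2 d20 H2] := cvg_right_ex c2 e20.
pose h := Num.min d1 d2 / 2.
have hpos : 0 < h by rewrite divr_gt0 // lt_min d10.
have hm : h < Num.min d1 d2.
  by rewrite /h ltr_pdivrMr // ltr_pMr ?ltr1n // lt_min d10.
have hlt1 : h < d1 by apply: lt_le_trans hm _; rewrite ge_min lexx.
have hlt2 : h < d2 by apply: lt_le_trans hm _; rewrite ge_min lexx orbT.
apply: le_trans (ler_distD (f h) _ _) _.
rewrite distrC (splitr e); apply: lerD; [exact: H1 | exact: H2].
Qed.
End Aux.

Section Main.
Context {R : realType} {X : completeNormedModType R}.
Variables (T S : R -> X -> X) (D : set X) (L M P : X -> X) (ct delta b : R).
Hypotheses (hT : C0_contraction_semigroup T) (hgT : generator_of T D L)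
  (hM : contraction_op M) (hP : projection_op P)
  (d0 : 0 < delta) (d1 : delta < 1) (ct0 : 0 <= ct)
  (hMP : forall n : nat, (1 <= n)%N ->
     opnorm_le (fun x => iter n M x - P x) (ct * delta ^+ n))
  (b0 : 0 <= b)
  (hb : forall t : R, 0 <= t ->
     opnorm_le (fun x => P (T t (x - P x))) (t * b) /\
     opnorm_le (fun x => T t (P x) - P (T t (P x))) (t * b))
  (hS : C0_semigroup S)
  (hgS : generator_of S [set x | D (P x)] (fun x => P (L (P x)))).

Lemma geom e : 0 < e -> exists n : nat, (1 <= n)%N /\ ct * delta ^+ n < e.
Proof.
move=> e0.
pose q := delta^-1 - 1.
have q0 : 0 < q by rewrite /q subr_gt0 invf_gt1.
have dq : delta = (1 + q)^-1 by rewrite /q addrC subrK invrK.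
clearbody q.
pose n := (Num.trunc (ct / (e * q))).+1.
exists n; split => //.
rewrite dq exprVn ltr_pdivrMr ?exprn_gt0 ?addr_gt0 //.
have h1 := bernoulli n (ltW q0).
have h2 : ct < n%:R * (e * q).
  by rewrite -ltr_pdivrMr ?mulr_gt0 //; apply: truncnS_gt.
nra.
Qed.

Lemma geomx (A e : R) : 0 <= A -> 0 < e ->
  exists n : nat, (1 <= n)%N /\ ct * delta ^+ n * A < e.
Proof.
move=> A0 e0; have [n [n1 hn]] := geom (divr_gt0 e0 (ltr_wpDl A0 ltr01)).
exists n; split => //.
have h0 : 0 <= ct * delta ^+ n by rewrite mulr_ge0 // exprn_ge0 // ltW.
apply: le_lt_trans (_ : _ <= e / (A + 1) * A) _.
  by apply: ler_wpM2r => //; exact: ltW.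
rewrite mulrAC ltr_pdivrMr ?ltr_wpDl // ltr_pM2l //; lra.
Qed.

Lemma Mlin : is_linear M. Proof. by case: hM. Qed.
Lemma Plin : is_linear P. Proof. by case: hP => [[]]. Qed.
Lemma PP x : P (P x) = P x. Proof. by case: hP => _ ->. Qed.

Lemma iterM_contr n x : `|iter n M x| <= `|x|.
Proof.
elim: n => [//|n IH] /=; apply: le_trans IH.
by have := hM.2 (iter n M x); rewrite mul1r.
Qed.

Lemma iterM_lin n : is_linear (iter n M).
Proof.
elim: n => [|n IH] a x y /=; first by [].
by rewrite IH (Mlin).
Qed.

Lemma P_contr x : `|P x| <= `|x|.
Proof.
apply/ler_addgt0Pr => e e0.
have [n [n1 hn]] := geomx (normr_ge0 x) e0.
apply: le_trans (norm_split (iter n M x) _) _.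
apply: lerD; first exact: iterM_contr.
rewrite -normrN opprB; apply: le_trans (hMP n1 x) _; exact: ltW.
Qed.

Lemma small_zero (v : X) (C : R) : 0 <= C ->
  (forall n : nat, (1 <= n)%N -> `|v| <= C * (ct * delta ^+ n)) -> v = 0.
Proof.
move=> C0 H; apply/eqP; rewrite -normr_eq0 eq_le normr_ge0 andbT.
apply/ler_addgt0Pr => e e0; rewrite add0r.
have [n [n1 hn]] := geomx C0 e0.
by apply: le_trans (H n n1) _; rewrite mulrC ltW.
Qed.

Lemma geom_mono n (A : R) : 0 <= A ->
  ct * delta ^+ n.+1 * A <= A * (ct * delta ^+ n).
Proof.
move=> A0; rewrite mulrC; apply: ler_wpM2l => //.
rewrite exprSr mulrA; apply: ler_piMr; last exact: ltW.
by rewrite mulr_ge0 // exprn_ge0 // ltW.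
Qed.

Lemma MP x : M (P x) = P x.
Proof.
apply/eqP; rewrite -subr_eq0; apply/eqP.
apply: (@small_zero _ (`|x| + `|x|)); first by rewrite addr_ge0.
move=> n n1.
apply: le_trans (ler_distD (iter n.+1 M x) _ _) _.
rewrite mulrDl; apply: lerD.
  rewrite iterS -(linB Mlin); apply: le_trans (hM.2 _) _; rewrite mul1r.
  by rewrite -normrN opprB mulrC; apply: hMP.
apply: le_trans (hMP (leqW n1) x) _; exact: geom_mono.
Qed.

Lemma PM x : P (M x) = P x.
Proof.
apply/eqP; rewrite -subr_eq0; apply/eqP.
apply: (@small_zero _ (`|x| + `|x|)); first by rewrite addr_ge0.
move=> n n1.
apply: le_trans (ler_distD (iter n.+1 M x) _ _) _.
rewrite mulrDl; apply: lerD.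
  rewrite iterSr -normrN opprB; apply: le_trans (hMP n1 _) _.
  rewrite mulrC; apply: ler_wpM2r; first by rewrite mulr_ge0 // exprn_ge0 // ltW.
  by have := hM.2 x; rewrite mul1r.
apply: le_trans (hMP (leqW n1) x) _; exact: geom_mono.
Qed.


Lemma idB (V : zmodType) (a1 a2 a3 a4 : V) : (a1 - a2) - (a3 - a4) = (a1 - a3) - (a2 - a4).
Proof. by rewrite !opprB addrACA [RHS]addrACA (addrC (- a2)). Qed.

Lemma idD (V : zmodType) (u p i s : V) : u - s = (p - i) + (i - s) + (u - p).
Proof.
rewrite (addrA (p - i) i (- s)) subrK [RHS]addrC (addrA (u - p) p (- s)) subrK //.
Qed.

Lemma Tlin r : 0 <= r -> is_linear (T r).
Proof. by move=> r0; case: (hT.1.1 r r0). Qed.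
Lemma Tcontr r v : 0 <= r -> `|T r v| <= `|v|.
Proof. by move=> r0; have := hT.2 r r0 v; rewrite mul1r. Qed.
Lemma T_ok : sg_ok T.
Proof. by case: hT => [[hb1 [h0 [hsg _]]] _]; split => // r r0; case: (hb1 r r0). Qed.
Lemma Slin r : 0 <= r -> is_linear (S r).
Proof. by move=> r0; case: (hS.1 r r0). Qed.
Lemma S_ok : sg_ok S.
Proof. by case: hS => [hb1 [h0 [hsg _]]]; split => // r r0; case: (hb1 r r0). Qed.

Lemma normQ x : `|x - P x| <= `|x| + `|x|.
Proof. by apply: le_trans (ler_normB _ _) _; rewrite lerD2l P_contr. Qed.
Lemma PQ x : P (x - P x) = 0.
Proof. by rewrite (linB Plin) PP subrr. Qed.

Lemma QL_bound z : D z -> P z = z -> `|L z - P (L z)| <= b * `|z|.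
Proof.
move=> Dz Pz; apply/ler_addgt0Pr => e e0.
have e20 : 0 < e / 2 by rewrite divr_gt0.
have [d dpos hd] := cvg_right_ex (hgT.2 z Dz) e20.
pose h := d / 2.
have hpos : 0 < h by rewrite divr_gt0.
have hd' : h < d by rewrite /h ltr_pdivrMr // ltr_pMr ?ltr1n.
clearbody h.
set dq := diffq T z h.
apply: le_trans (norm_split (dq - P dq) _) _.
apply: lerD; last first.
  rewrite idB -(linB Plin); apply: le_trans (normQ _) _.
  rewrite -normrN opprB (splitr e); apply: lerD; exact: hd.
rewrite /dq /diffq (linZ Plin) -scalerBr (linB Plin) Pz opprB addrA subrK.
rewrite normrZ normfV gtr0_norm // ler_pdivrMl //.
rewrite -{1 2}Pz; apply: le_trans ((hb (ltW hpos)).2 z) _.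
by rewrite mulrA.
Qed.


Lemma comm s y : 0 <= s -> D (P y) ->
  D (P (S s y)) /\ P (L (P (S s y))) = S s (P (L (P y))).
Proof.
move=> s0 Dy.
have [_ [_ hsg]] := S_ok.
have hc : diffq S (S s y) @ 0^'+ --> S s (P (L (P y))).
  have [hl [C hC]] := hS.1 s s0.
  have cy := hgS.2 y Dy.
  apply: ex_cvg_right => e e0.
  have ec : 0 < e / (`|C| + 1) by rewrite divr_gt0 // ltr_wpDl.
  have [d dpos hd] := cvg_right_ex cy ec.
  exists d => // h h0 hdh.
  have -> : diffq S (S s y) h = S s (diffq S y h).
    rewrite /diffq (linZ hl) (linB hl).
    by rewrite -(hsg _ _ _ (ltW h0) s0) (addrC h s) (hsg _ _ _ s0 (ltW h0)).
  rewrite -(linB hl); apply: le_trans (hC _) _.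
  apply: le_trans (_ : _ <= `|C| * (e / (`|C| + 1))) _.
    apply: le_trans (_ : _ <= `|C| * `|diffq S y h - P (L (P y))|) _.
      by apply: ler_wpM2r => //; exact: ler_norm.
    by apply: ler_wpM2l => //; exact: hd.
  exact: small_eps.
have Dsy : D (P (S s y)) by apply/(hgS.1 _).2; exists (S s (P (L (P y)))).
by split => //; apply: (lim_unique_right (hgS.2 _ Dsy) hc).
Qed.

Lemma S2 t K : 1 <= K ->
  (forall s v, 0 <= s -> s <= t -> `|S s v| <= K * `|v|) ->
  forall u s, 0 <= s -> s <= t -> D (P u) -> D (P (P (L (P u)))) ->
  `|S s u - u - s *: P (L (P u))| <=
     s ^+ 2 * (K * `|P (L (P (P (L (P u)))))|).
Proof.
move=> K1 hK u s s0 st Du DAu.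
have K0 : 0 <= K by apply: le_trans K1.
apply: (@sg_second _ _ S (fun v => v) u _ s K) => //.
- exact: S_ok.
- by rewrite mulr_ge0.
- move=> r v r0 rs; apply: hK => //; exact: le_trans st.
- move=> r r0 rs; rewrite mulrA.
  apply: (sg_first S_ok r0 K0) => //.
    move=> r' v r'0 r's; apply: hK => //; apply: le_trans st.
    exact: le_trans rs.
  exact: hgS.2.
- exact: hgS.2.
Qed.


Lemma Qshift v c : P c = c -> v - P v = (v - c) - P (v - c).
Proof. by move=> Pc; rewrite (linB Plin) Pc opprB addrA subrK. Qed.

Lemma Srange t K : 1 <= K ->
  (forall s v, 0 <= s -> s <= t -> `|S s v| <= K * `|v|) ->
  forall y s, 0 <= s -> s <= t -> P y = y -> D (P y) ->
  D (P (P (L (P y)))) -> P (S s y) = S s y.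
Proof.
move=> K1 hK y s s0 st Py Dy DAy.
have K0 : 0 <= K by apply: le_trans K1.
have [_ [h0 hsg]] := S_ok.
set N := `|P (L (P (P (L (P y)))))|.
set c := K * (K * N).
have c0 : 0 <= c by rewrite /c /N !mulr_ge0.
apply/eqP; rewrite eq_sym -subr_eq0 -normr_eq0 eq_le normr_ge0 andbT.
apply/ler_addgt0Pr => e e0; rewrite add0r.
have [s00|sn0] := eqVneq s 0.
  by rewrite s00 h0 Py subrr normr0 ltW.
have spos : 0 < s by rewrite lt_def sn0 s0.
have sc0 : 0 <= s ^+ 2 * (2 * c) by rewrite mulr_ge0 ?sqr_ge0 // mulr_ge0.
have [m [m0 hm]] := choose_m e0 sc0.
pose h := s / m%:R.
have hpos : 0 < h by rewrite divr_gt0 // ltr0n.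
have mh : m%:R * h = s by rewrite /h mulrC divfK // pnatr_eq0 -lt0n.
have hs : h <= s.
  by rewrite -mh; apply: ler_peMl; [exact: ltW | rewrite ler1n].
clearbody h.
have key : forall j, (j <= m)%N ->
    `|S (j%:R * h) y - P (S (j%:R * h) y)| <= j%:R * (h ^+ 2 * (2 * c)).
  elim => [|j IH] hj.
    by rewrite mul0r h0 Py subrr normr0 mul0r.
  have jh0 : 0 <= j%:R * h by rewrite mulr_ge0 // ltW.
  have jhs : j%:R * h <= s.
    rewrite -mh; apply: ler_wpM2r; [exact: ltW | by rewrite ler_nat ltnW].
  have [Du Au] := comm jh0 Dy.
  have [DAu' AAu] := comm jh0 DAy.
  set u := S (j%:R * h) y.
  have DAu : D (P (P (L (P u)))) by rewrite Au.
  rewrite -natr1 mulrDl mul1r (addrC (j%:R * h) h) (hsg _ _ _ (ltW hpos) jh0) -/u.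
  apply: le_trans (norm_split (u - P u) _) _.
  rewrite mulrDl mul1r; apply: lerD; first exact: IH (ltnW hj).
  rewrite idB -(linB Plin).
  rewrite (Qshift (S h u - u) (c := h *: P (L (P u)))); last first.
    by rewrite (linZ Plin) PP.
  apply: le_trans (normQ _) _.
  have H2 := S2 K1 hK (ltW hpos) (le_trans hs st) Du DAu.
  rewrite Au AAu in H2.
  have H3 : `|S h u - u - h *: P (L (P u))| <= h ^+ 2 * c.
    rewrite Au; apply: le_trans H2 _.
    apply: ler_wpM2l; first exact: sqr_ge0.
    apply: ler_wpM2l => //; apply: hK => //; exact: le_trans jhs st.
  have -> : h ^+ 2 * (2 * c) = h ^+ 2 * c + h ^+ 2 * c by ring.
  by apply: lerD; exact: H3.
have := key m (leqnn m); rewrite mh => /le_trans; apply.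
apply: ltW; move: hm; rewrite -mh => hm; apply: le_lt_trans hm.
rewrite le_eqVlt; apply/orP; left; apply/eqP.
by field; rewrite pnatr_eq0 -lt0n.
Qed.


Lemma T2 tau z : 0 <= tau -> P z = z -> D z -> D (P (L z)) ->
  `|P (T tau z) - z - tau *: P (L z)| <=
    tau ^+ 2 * (`|L (P (L z))| + b * `|L z|).
Proof.
move=> tau0 Pz Dz DPLz.
have hK1 : forall r v, 0 <= r -> `|T r v| <= 1 * `|v|.
  by move=> r v r0; rewrite mul1r; exact: Tcontr.
have G0 : 0 <= `|L (P (L z))| + b * `|L z| by rewrite addr_ge0 // mulr_ge0.
have := @sg_second _ _ T P z (L z) tau 1 _ T_ok Plin tau0 ler01 G0.
rewrite (linB Plin) (linB Plin) (linZ Plin) Pz; apply.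
- move=> r v r0 _; rewrite mul1r; apply: le_trans (P_contr _) _; exact: Tcontr.
- move=> r r0 _.
  set w := P (L z).
  have -> : T r (L z) = T r w + T r (L z - w).
    by rewrite -(linD (Tlin r0)) addrC subrK.
  rewrite (linB Plin) (linD Plin) -/w.
  have -> : P (T r w) + P (T r (L z - w)) - w =
      P (T r w - w) + P (T r (L z - P (L z))).
    by rewrite (linB Plin) /w PP addrAC.
  apply: le_trans (ler_normD _ _) _.
  rewrite mulrDr; apply: lerD.
    apply: le_trans (P_contr _) _.
    have := sg_first T_ok r0 ler01 (fun rr v rr0 _ => hK1 rr v rr0) (hgT.2 w DPLz).
    rewrite mulr1; apply.
  by rewrite mulrA; apply: (hb r0).1.
- exact: hgT.2.
Qed.


Lemma step_err t K : 1 <= K ->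
  (forall s v, 0 <= s -> s <= t -> `|S s v| <= K * `|v|) ->
  forall y s tau, 0 <= s -> s <= t -> 0 <= tau -> tau <= t ->
  P y = y -> D (P y) -> D (P (P (L (P y)))) ->
  `|P (T tau (P (S s y))) - S tau (S s y)| <=
    tau ^+ 2 * ((1 + K + b + b + b * b) *
      (K * (`|y| + `|P (L (P y))| + `|P (L (P (P (L (P y)))))|))).
Proof.
move=> K1 hK y s tau s0 st tau0 taut Py Dy DAy.
have K0 : 0 <= K by apply: le_trans K1.
set z := S s y.
have Pz : P z = z by apply: (Srange K1 hK).
have [Dz Az] := comm s0 Dy.
have [DAz' AAz] := comm s0 DAy.
rewrite -/z in Dz Az.
have DAz : D (P (P (L (P z)))) by rewrite Az.
set N := `|y| + `|P (L (P y))| + `|P (L (P (P (L (P y)))))|.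
have n1 : `|z| <= K * N.
  apply: le_trans (hK _ _ s0 st) _; apply: ler_wpM2l => //.
  by rewrite /N -addrA lerDl addr_ge0.
have n2 : `|P (L (P z))| <= K * N.
  rewrite Az; apply: le_trans (hK _ _ s0 st) _; apply: ler_wpM2l => //.
  by rewrite /N addrAC lerDr addr_ge0.
have n3 : `|P (L (P (P (L (P z)))))| <= K * N.
  rewrite Az AAz; apply: le_trans (hK _ _ s0 st) _; apply: ler_wpM2l => //.
  by rewrite /N lerDr addr_ge0.
rewrite Pz.
apply: le_trans (ler_distD (z + tau *: P (L (P z))) _ _) _.
have e2 := S2 K1 hK tau0 taut Dz DAz.
rewrite Pz in Dz DAz n2 n3 e2 *.
rewrite PP in DAz n3 e2.
have e1 := T2 tau0 Pz Dz DAz.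
have f1 : `|L z| <= `|P (L z)| + b * `|z|.
  apply: le_trans (norm_split (P (L z)) _) _; rewrite lerD2l.
  exact: QL_bound.
have Dw : D (P (L z)) by [].
have Pw : P (P (L z)) = P (L z) by rewrite PP.
have f2 : `|L (P (L z))| <= `|P (L (P (L z)))| + b * `|P (L z)|.
  apply: le_trans (norm_split (P (L (P (L z)))) _) _; rewrite lerD2l.
  exact: QL_bound.
have -> : (1 + K + b + b + b * b) * (K * N) =
   ((K * N + b * (K * N)) + b * (K * N + b * (K * N))) + K * (K * N) by ring.
have {}e1 : `|P (T tau z) - (z + tau *: P (L z))| <=
    tau ^+ 2 * (`|L (P (L z))| + b * `|L z|) by rewrite opprD addrA.
have e2' : `|z + tau *: P (L z) - S tau z| <=
    tau ^+ 2 * (K * `|P (L (P (L z)))|).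
  by rewrite distrC opprD addrA.
apply: le_trans (lerD e1 e2') _.
rewrite -mulrDr; apply: ler_wpM2l; first exact: sqr_ge0.
apply: lerD; last by apply: ler_wpM2l.
apply: lerD.
  apply: le_trans f2 _; apply: lerD => //; exact: ler_wpM2l.
apply: ler_wpM2l => //; apply: le_trans f1 _; apply: lerD => //.
exact: ler_wpM2l.
Qed.


Lemma chernoff t K : 0 <= t -> 1 <= K ->
  (forall s v, 0 <= s -> s <= t -> `|S s v| <= K * `|v|) ->
  forall y (n : nat), (0 < n)%N ->
  P y = y -> D (P y) -> D (P (P (L (P y)))) ->
  `|iter n (fun v => P (T (t / n%:R) (P v))) y - S t y| <=
    t ^+ 2 / n%:R * ((1 + K + b + b + b * b) *
      (K * (`|y| + `|P (L (P y))| + `|P (L (P (P (L (P y)))))|))).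
Proof.
move=> t0 K1 hK y n n0 Py Dy DAy.
have [_ [h0 hsg]] := S_ok.
set G := (1 + K + b + b + b * b) * _.
have nR0 : 0 < n%:R :> R by rewrite ltr0n.
pose tau := t / n%:R.
have tau0 : 0 <= tau by rewrite divr_ge0.
have ntau : n%:R * tau = t by rewrite /tau mulrC divfK // gt_eqF.
have taut : tau <= t.
  rewrite -[X in _ <= X]ntau; apply: ler_peMl => //; by rewrite ler1n.
rewrite -/tau.
clearbody tau.
have key : forall k, (k <= n)%N ->
   `|iter k (fun v => P (T tau (P v))) y - S (k%:R * tau) y| <=
      k%:R * (tau ^+ 2 * G).
  elim => [|k IH] hk.
    by rewrite /= mul0r h0 subrr normr0 mul0r.
  have kt0 : 0 <= k%:R * tau by rewrite mulr_ge0.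
  have kts : k%:R * tau <= t.
    rewrite -ntau; apply: ler_wpM2r => //; by rewrite ler_nat ltnW.
  rewrite iterS -natr1 mulrDl mul1r (addrC (k%:R * tau)) (hsg _ _ _ tau0 kt0).
  set I := iter k _ y.
  apply: le_trans (ler_distD (P (T tau (P (S (k%:R * tau) y)))) _ _) _.
  rewrite mulrDl mul1r; apply: lerD; last by rewrite /G; exact: (step_err K1 hK kt0 kts tau0 taut Py Dy DAy).
  rewrite -(linB Plin) -(linB (Tlin tau0)) -(linB Plin).
  apply: le_trans (P_contr _) _; apply: le_trans (Tcontr _ tau0) _.
  apply: le_trans (P_contr _) _; exact: IH (ltnW hk).
have := key n (leqnn n); rewrite ntau => /le_trans; apply.
rewrite -ntau le_eqVlt; apply/orP; left; apply/eqP.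
by field; rewrite gt_eqF.
Qed.


Lemma main_sec t : 0 <= t ->
  exists (c : R) (n0 : nat),
    0 < c /\ (1 <= n0)%N /\ ct * delta ^+ n0 < 1 /\
    forall (n : nat) (x : X), (1 <= n)%N ->
      D (P x) -> D (P (L (P x))) ->
      `| iter n (fun y => iter n0 M (T (t / n%:R) y)) x - S t (P x) |
        <= c / n%:R * (`|x| + `|L (P x)| + `|L (P (L (P x)))|)
           + (ct * delta ^+ n0) ^+ n * `|x|.
Proof.
move=> t0.
have [K [K1 hK]] := C0_local_bound hS t0.
have K0 : 0 <= K by apply: le_trans K1.
have [n0 [n01 hn0]] := geom ltr01.
set dt := ct * delta ^+ n0.
have dt0 : 0 <= dt by rewrite mulr_ge0 // exprn_ge0 // ltW.
pose beta := (1 - dt)^-1.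
have beta0 : 0 < beta by rewrite invr_gt0 subr_gt0.
have hbeta : beta * (1 - dt) = 1 by rewrite mulVf // gt_eqF // subr_gt0.
pose G0 := (1 + K + b + b + b * b) * K.
have G00 : 0 <= G0 by rewrite mulr_ge0 // !addr_ge0 // mulr_ge0.
pose A1 := t * b * (2 * beta + t * b * beta) + t * b * beta.
have tb0 : 0 <= t * b by rewrite mulr_ge0.
have A10 : 0 <= A1.
  have b0' := ltW beta0.
  apply: addr_ge0; last exact: mulr_ge0.
  apply: mulr_ge0 => //; apply: addr_ge0; exact: mulr_ge0.
pose c := A1 + t ^+ 2 * G0 + 1.
have c0 : 0 < c by rewrite /c ltr_wpDl // addr_ge0 // mulr_ge0 // sqr_ge0.
exists c, n0; split => //; split => //; split => //.
move=> n x n1 Dx DLx.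
have nR0 : 0 < n%:R :> R by rewrite ltr0n.
pose tau := t / n%:R.
have tau0 : 0 <= tau by rewrite divr_ge0.
have ntau : n%:R * tau = t by rewrite /tau mulrC divfK // gt_eqF.
have Mn0P : forall k y, iter k M (P y) = P y.
  by elim => //= k IH y; rewrite IH MP.
have PMn0 : forall k y, P (iter k M y) = P y.
  by elim => //= k IH y; rewrite PM IH.
pose E := fun y => iter n0 M y - P y.
have Elin : is_linear E.
  move=> a v w; rewrite /E (iterM_lin n0 a v w) (Plin a v w).
  by rewrite scalerBr opprD addrACA.
have Ebd : forall y, `|E y| <= dt * `|y| := hMP n01.
have EP : forall y, E (P y) = 0 by move=> y; rewrite /E Mn0P PP subrr.
pose W := fun y => iter n0 M (T tau y).
have Wc : forall y, `|W y| <= `|y|.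
  by move=> y; apply: le_trans (iterM_contr _ _) _; exact: Tcontr.
have QW : forall y, W y - P (W y) = E (T tau y).
  by move=> y; rewrite /W PMn0.
pose u := fun k => iter k W x.
have uc : forall k, `|u k| <= `|x|.
  by elim => //= k IH; apply: le_trans (Wc _) IH.
pose Y := tau * b * `|x|.
have Y0 : 0 <= Y by rewrite !mulr_ge0.
have Q1 : forall k, `|u k.+1 - P (u k.+1)| <=
    dt * `|u k - P (u k)| + dt * Y.
  move=> k; rewrite [u k.+1]/u iterS -/(u k) QW.
  set v := u k.
  have -> : E (T tau v) =
      E (T tau (v - P v)) + E (T tau (P v) - P (T tau (P v))).
    rewrite (linB Elin (T tau (P v))) EP subr0 -(linD Elin).
    by rewrite -(linD (Tlin tau0)) subrK.
  apply: le_trans (ler_normD _ _) _; apply: lerD.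
    apply: le_trans (Ebd _) _; apply: ler_wpM2l => //; exact: Tcontr.
  apply: le_trans (Ebd _) _; apply: ler_wpM2l => //.
  apply: le_trans ((hb tau0).2 v) _; rewrite /Y; apply: ler_wpM2l.
    by rewrite mulr_ge0.
  exact: uc.
have Q2 : forall k, (1 <= k)%N ->
    `|u k - P (u k)| <= dt ^+ k * `|x| + beta * Y.
  elim => [//|k IH] _.
  case: k IH => [_|k IH].
    rewrite /u /= QW expr1; apply: le_trans (Ebd _) _.
    rewrite -[X in X <= _]addr0; apply: lerD; last by rewrite mulr_ge0 // ltW.
    by apply: ler_wpM2l => //; exact: Tcontr.
  apply: le_trans (Q1 _) _.
  have := IH isT => H.
  apply: le_trans (lerD (ler_wpM2l dt0 H) (lexx _)) _.
  rewrite [dt ^+ k.+2]exprS.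
  have dt1 : dt <= 1 by exact: ltW.
  have h1 : dt * Y <= Y by rewrite ler_piMl.
  have h2 : beta * Y - dt * (beta * Y) = Y.
    by rewrite -[in RHS](mul1r Y) -hbeta; ring.
  lra.
have Q3 : forall k, `|u k - P (u k)| <= 2 * dt ^+ k * `|x| + beta * Y.
  case => [|k].
    rewrite /u /= expr0 mulr1; apply: le_trans (normQ _) _.
    have := mulr_ge0 (ltW beta0) Y0; lra.
  apply: le_trans (Q2 k.+1 isT) _; rewrite lerD2r; apply: ler_wpM2r => //.
  by apply: ler_peMl; [rewrite exprn_ge0 | lra].
pose a := fun v => P (T tau (P v)).
have P1 : forall k, `|P (u k) - iter k a (P x)| <=
    Y * (2 * beta * (1 - dt ^+ k) + k%:R * (tau * b * beta)).
  elim => [|k IH].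
    by rewrite /u /= subrr normr0 expr0 subrr !mulr0 mul0r addr0 mulr0.
  rewrite [u k.+1]/u iterS -/(u k) /W PMn0 iterS.
  set v := u k; set I := iter k a (P x).
  have -> : P (T tau v) = P (T tau (P v)) + P (T tau (v - P v)).
    by rewrite -(linD Plin) -(linD (Tlin tau0)) (addrC (P v)) subrK.
  rewrite addrAC; apply: le_trans (ler_normD _ _) _.
  have -> : P (T tau (P v)) - a I = P (T tau (P (P v - I))).
    by rewrite /a (linB Plin) PP (linB (Tlin tau0)) (linB Plin).
  have H1 : `|P (T tau (P (P v - I)))| <= `|P v - I|.
    apply: le_trans (P_contr _) _; apply: le_trans (Tcontr _ tau0) _.
    exact: P_contr.
  have H2 : `|P (T tau (v - P v))| <= tau * b * `|v - P v|.
    by have := (hb tau0).1 (v - P v); rewrite PQ subr0.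
  apply: le_trans (lerD (le_trans H1 IH) (le_trans H2 (ler_wpM2l _ (Q3 k)))) _.
    by rewrite mulr_ge0.
  have hZ : Y * 2 * dt ^+ k = Y * 2 * (beta * (1 - dt)) * dt ^+ k.
    by rewrite hbeta mulr1.
  have -> : tau * b * (2 * dt ^+ k * `|x| + beta * Y) =
      Y * 2 * dt ^+ k + Y * (tau * b * beta) by rewrite /Y; ring.
  rewrite hZ -natr1 exprS le_eqVlt; apply/orP; left; apply/eqP.
  ring.
change (`|u n - S t (P x)| <= c / n%:R * (`|x| + `|L (P x)| + `|L (P (L (P x)))|)
   + dt ^+ n * `|x|).
have Ch := chernoff t0 K1 hK (y := P x) n1 (PP x).
rewrite !PP in Ch; have {}Ch := Ch Dx DLx.
set Nx := `|x| + `|L (P x)| + `|L (P (L (P x)))|.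
have Nx_ge : `|x| <= Nx by rewrite /Nx -addrA lerDl addr_ge0.
have -> : u n - S t (P x) = (P (u n) - iter n a (P x)) +
    (iter n a (P x) - S t (P x)) + (u n - P (u n)).
  exact: idD.
apply: le_trans (ler_normD _ _) _.
apply: le_trans (lerD (ler_normD _ _) (lexx _)) _.
have hB1 : `|P (u n) - iter n a (P x)| <= Y * (2 * beta + t * b * beta).
  apply: le_trans (P1 n) _; apply: ler_wpM2l => //; apply: lerD.
    apply: ler_piMr; first by rewrite mulr_ge0 // ltW.
    have := exprn_ge0 n dt0; lra.
  by rewrite mulrA mulrA ntau.
have hCh : `|iter n a (P x) - S t (P x)| <= t ^+ 2 / n%:R * (G0 * Nx).
  apply: le_trans Ch _; apply: ler_wpM2l.
    by rewrite divr_ge0 // sqr_ge0.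
  rewrite /G0 -mulrA; apply: ler_wpM2l; first by rewrite !addr_ge0 // mulr_ge0.
  apply: ler_wpM2l => //; rewrite /Nx.
  by apply: lerD; [apply: lerD|]; apply: P_contr.
have hB3 := Q2 n n1.
apply: le_trans (lerD (lerD hB1 hCh) hB3) _.
have hY : Y = n%:R^-1 * (t * b * `|x|) by rewrite /Y /tau; ring.
rewrite hY /c.
have h1 : n%:R^-1 * (A1 * `|x|) <= n%:R^-1 * (A1 * Nx).
  by apply: ler_wpM2l; [rewrite invr_ge0 ltW | apply: ler_wpM2l].
have Nx0 : 0 <= Nx := le_trans (normr_ge0 x) Nx_ge.
have h2 : 0 <= n%:R^-1 * Nx by rewrite mulr_ge0 // invr_ge0 ltW.
rewrite /A1 in h1 *.
lra.
Qed.

End Main.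

Unset Implicit Arguments.

Theorem corollary3p3 (R : realType) (X : completeNormedModType R)
  (T : R -> X -> X) (D : set X) (L : X -> X) (M P : X -> X)
  (ct delta b : R) (S : R -> X -> X) :
  C0_contraction_semigroup T ->
  generator_of T D L ->
  contraction_op M ->
  projection_op P ->
  0 < delta -> delta < 1 -> 0 <= ct ->
  (forall n : nat, (1 <= n)%N ->
     opnorm_le (fun x => iter n M x - P x) (ct * delta ^+ n)) ->
  0 <= b ->
  (forall t : R, 0 <= t ->
     opnorm_le (fun x => P (T t (x - P x))) (t * b) /\
     opnorm_le (fun x => T t (P x) - P (T t (P x))) (t * b)) ->
  C0_semigroup S ->
  generator_of S [set x | D (P x)] (fun x => P (L (P x))) ->
  forall t : R, 0 <= t ->
  exists (c : R) (n0 : nat),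
    0 < c /\ (1 <= n0)%N /\ ct * delta ^+ n0 < 1 /\
    forall (n : nat) (x : X), (1 <= n)%N ->
      D (P x) -> D (P (L (P x))) ->
      `| iter n (fun y => iter n0 M (T (t / n%:R) y)) x - S t (P x) |
        <= c / n%:R * (`|x| + `|L (P x)| + `|L (P (L (P x)))|)
           + (ct * delta ^+ n0) ^+ n * `|x|.
Proof.
move=> hT hgT hM hP d0 d1 ct0 hMP b0 hb hS hgS t t0.
exact: (main_sec hT hgT hM hP d0 d1 ct0 hMP b0 hb hS hgS t0).
Qed.
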